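(* For a ring $R$, the following are equivalent: (1) $R$ is right Noetherian; (2) every $F$-injective right $R$-module is injective; (3) every $F$-injective right $R$-module is quasi-pseudo principally injective.
   Context: All rings are associative with identity and all modules are unitary right $R$-modules. A right $R$-module $M$ is $F$-injective if for every finitely generated right ideal $I$ of $R$, every $R$-homomorphism $I\to M$ extends to an $R$-homomorphism $R\to M$. A submodule $A$ of $M$ is $M$-cyclic if $A\cong M/L$ for some submodule $L$ of $M$ (equivalently, $A$ is the image of an endomorphism of $M$). $M$ is quasi-pseudo principally injective if for every $M$-cyclic submodule $A$ of $M$, every $R$-monomorphism $A\to M$ extends to an $R$-endomorphism of $M$. *)

(* Defs.v *)
(* Right R-modules are modelled as left modules over the
   converse ring R^c (lmodType R^c): for m : M and r : R, the right action
   m.r is written  r *: m  (with r : R^c).  The right regular module R_R is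
   (R^c)^o, where  r *: x = x * r. *)
From HB Require Import structures.
From mathcomp Require Import all_boot all_order all_algebra.
Set Implicit Arguments. Unset Strict Implicit. Unset Printing Implicit Defensive.
Import GRing.Theory.
Local Open Scope ring_scope.

Notation rmodType R := (lmodType (R^c)%type).
Notation RR R := ((R^c)^o)%type.

Section Defs.
Variable R : pzRingType.

Definition submodule (M : rmodType R) (A : M -> Prop) : Prop :=
  [/\ A 0,
      (forall x y, A x -> A y -> A (x + y)) &
      (forall (r : R^c) x, A x -> A (r *: x))].

Definition right_ideal (I : RR R -> Prop) : Prop := @submodule (RR R) I.

Definition fin_gen_submodule (M : rmodType R) (A : M -> Prop) : Prop :=
  exists (n : nat) (s : 'I_n -> M),
    forall x, A x <-> exists c : 'I_n -> R^c, x = \sum_(i < n) c i *: s i.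

Definition right_noetherian : Prop :=
  forall I : nat -> (RR R -> Prop),
    (forall n, right_ideal (I n)) ->
    (forall n x, I n x -> I n.+1 x) ->
    exists N, forall n, (N <= n)%N -> forall x, I n x <-> I N x.

Definition hom_on (M N : rmodType R) (A : M -> Prop) (f : M -> N) : Prop :=
  (forall x y, A x -> A y -> f (x + y) = f x + f y) /\
  (forall (r : R^c) x, A x -> f (r *: x) = r *: f x).

Definition mono_on (M N : rmodType R) (A : M -> Prop) (f : M -> N) : Prop :=
  hom_on A f /\ (forall x y, A x -> A y -> f x = f y -> x = y).

Definition extends_all (B N : rmodType R) (A : B -> Prop) : Prop :=
  forall f : B -> N, hom_on A f ->
    exists g : {linear B -> N}, forall x, A x -> g x = f x.

Definition injective_mod (M : rmodType R) : Prop :=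
  forall (B : rmodType R) (A : B -> Prop), submodule A -> extends_all M A.

Definition F_injective (M : rmodType R) : Prop :=
  forall I : RR R -> Prop, right_ideal I -> fin_gen_submodule I ->
    extends_all M I.

Definition M_cyclic (M : rmodType R) (A : M -> Prop) : Prop :=
  exists h : {linear M -> M}, forall x, A x <-> exists y, x = h y.

Definition quasi_pseudo_principally_injective (M : rmodType R) : Prop :=
  forall A : M -> Prop, M_cyclic A ->
    forall f : M -> M, mono_on A f ->
      exists g : {linear M -> M}, forall x, A x -> g x = f x.

End Defs.

(* Main.v *)
Require Import Defs.
From HB Require Import structures.
From mathcomp Require Import all_boot all_order all_algebra.
From mathcomp Require Import boolp classical_sets.
From mathcomp Require Import ring lra zify.
Set Implicit Arguments. Unset Strict Implicit. Unset Printing Implicit Defensive.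
Import Order.TTheory GRing.Theory Num.Theory.
Local Open Scope ring_scope.

Definition fr (x : rat) : rat := x - (Num.floor x)%:~R.

Lemma fr_itv x : (0 <= fr x) && (fr x < 1).
Proof.
rewrite /fr subr_ge0 Num.Theory.floor_le /= ltrBlDl.
by have := Num.Theory.floorD1_gt x; rewrite intrD.
Qed.

Lemma fr_id x : (0 <= x) && (x < 1) -> fr x = x.
Proof.
move=> h; rewrite /fr (Num.Theory.floor_def (m := 0)) ?subr0 //.

Qed.

Lemma fr_int x y : x - y \is a Num.int -> fr x = fr y.
Proof.
move=> h; have -> : x = y + (x - y) by rewrite addrC subrK.
rewrite /fr Num.Theory.floorDrz // intrD (Num.Theory.floorK h).
ring.
Qed.

Lemma fr_shift x (n : int) : fr (x + n%:~R) = fr x.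
Proof. by apply: fr_int; rewrite addrC addKr intr_int. Qed.

Lemma frE x : x = fr x + (Num.floor x)%:~R.
Proof. by rewrite /fr subrK. Qed.

Lemma fr_frl x y : fr (fr x + y) = fr (x + y).
Proof. by rewrite -(fr_shift (fr x + y) (Num.floor x)); congr fr; rewrite /fr; ring. Qed.

Lemma fr_frr x y : fr (x + fr y) = fr (x + y).
Proof. by rewrite addrC fr_frl addrC. Qed.

Lemma fr_fr x : fr (fr x) = fr x.
Proof. by rewrite fr_id // fr_itv. Qed.

Lemma fr_N x : fr (- fr x) = fr (- x).
Proof. by rewrite -(fr_shift (- fr x) (- Num.floor x)); congr fr; rewrite /fr; rewrite intrN; ring. Qed.

Definition QZ := {q : rat | (0 <= q) && (q < 1)}.
HB.instance Definition _ := Choice.on QZ.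
Definition qzm (x : rat) : QZ := exist _ (fr x) (fr_itv x).

Lemma qzmK (a : QZ) : qzm (val a) = a.
Proof. by apply: val_inj; rewrite /= fr_id //; case: a. Qed.

Lemma qzm_eq x y : qzm x = qzm y <-> fr x = fr y.
Proof. by split=> [h|h]; [have := congr1 val h | apply: val_inj]. Qed.

Definition qz_add (a b : QZ) := qzm (val a + val b).
Definition qz_opp (a : QZ) := qzm (- val a).
Definition qz0 := qzm 0.

Lemma qz_addA : associative qz_add.
Proof. by move=> a b c; apply/qzm_eq => /=; rewrite fr_frl fr_frr addrA. Qed.
Lemma qz_addC : commutative qz_add.
Proof. by move=> a b; apply/qzm_eq; rewrite addrC. Qed.
Lemma qz_add0 : left_id qz0 qz_add.
Proof. by move=> a; rewrite /qz_add /= fr_id // add0r qzmK. Qed.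
Lemma qz_addN : left_inverse qz0 qz_opp qz_add.
Proof. by move=> a; apply/qzm_eq => /=; rewrite fr_frl addNr. Qed.

HB.instance Definition _ := GRing.isZmodule.Build QZ qz_addA qz_addC qz_add0 qz_addN.

Lemma qzmD x y : qzm (x + y) = qzm x + qzm y.
Proof. by apply/qzm_eq => /=; rewrite fr_frl fr_frr. Qed.
Lemma qzm0 : qzm 0 = 0. Proof. by []. Qed.
Lemma qzmN x : qzm (- x) = - qzm x.
Proof. by apply/qzm_eq => /=; rewrite fr_N. Qed.
Lemma qzm_morph : zmod_morphism qzm.
Proof. by move=> x y; rewrite qzmD qzmN. Qed.
HB.instance Definition _ := GRing.isZmodMorphism.Build rat QZ qzm qzm_morph.
Lemma qzmMz x (n : int) : qzm (x *~ n) = qzm x *~ n.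
Proof. exact: raddfMz. Qed.
Lemma qzm_int (n : int) : qzm n%:~R = 0.
Proof. by apply/qzm_eq; rewrite -[n%:~R]add0r fr_shift. Qed.
Lemma qzm_eq0 x : qzm x = 0 -> x \is a Num.int.
Proof.
move/qzm_eq => h; have h0 : fr 0 = 0 by rewrite fr_id.
by rewrite (frE x) h h0 add0r intr_int.
Qed.

Definition mkLin (R : pzRingType) (U V : lmodType R) (f : U -> V)
  (H : forall (a : R) u v, f (a *: u + v) = a *: f u + f v) : {linear U -> V} :=
  HB.pack f (GRing.isLinear.Build R U V *:%R f H).

Lemma mkLinE (R : pzRingType) (U V : lmodType R) (f : U -> V) H x :
  @mkLin R U V f H x = f x.
Proof. by []. Qed.

Section Baer.
Local Open Scope classical_set_scope.
Variable R : pzRingType.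
Variable N : rmodType R.
Hypothesis HB : forall I : RR R -> Prop, right_ideal I -> extends_all N I.
Variable B : rmodType R.
Variable A : B -> Prop.
Hypothesis sA : submodule A.
Variable f : B -> N.
Hypothesis hf : hom_on A f.

Definition Good (G : set (B * N)) :=
  [/\ (forall x y y', G (x, y) -> G (x, y') -> y = y'),
      G (0, 0),
      (forall x y x' y', G (x, y) -> G (x', y') -> G (x + x', y + y')),
      (forall (r : R^c) x y, G (x, y) -> G (r *: x, r *: y)) &
      (forall a, A a -> G (a, f a))].

Definition PG (G : set (B * N)) := G = set0 \/ Good G.

Lemma f0 : f 0 = 0.
Proof.
case: sA => A0 _ _; case: hf => hadd _.
have h := hadd 0 0 A0 A0; rewrite addr0 in h.
have : f 0 + f 0 - f 0 = f 0 - f 0 by rewrite -h.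
by rewrite addrK subrr.
Qed.

Lemma Good_graph : Good [set p | A p.1 /\ p.2 = f p.1].
Proof.
case: sA => A0 AD AZ; case: hf => hadd hZ.
split => /=.
- by move=> x y y' [_ ->] [_ ->].
- by split => //; rewrite f0.
- by move=> x y x' y' [Ax ->] [Ax' ->]; split; [apply: AD | rewrite hadd].
- by move=> r x y [Ax ->]; split; [apply: AZ | rewrite hZ].
- by move=> a Aa.
Qed.

Lemma PG_good (F : set (set (B * N))) X p : F `<=` PG -> F X -> X p -> Good X.
Proof.
move=> FP FX Xp; case: (FP X FX) => // X0.
by move: Xp; rewrite X0.
Qed.

Lemma PG_chain (F : set (set (B * N))) : F `<=` PG -> total_on F subset ->
  PG (\bigcup_(X in F) X).
Proof.
move=> FP tot.
case: (pselect (exists X, F X /\ Good X)) => [[X0 [FX0 GX0]]|nG]; last first.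
  left; apply/seteqP; split => // p [X FX Xp]; apply: nG; exists X; split => //.
  exact: (PG_good FP FX Xp).
have two : forall p q, (\bigcup_(X in F) X) p -> (\bigcup_(X in F) X) q ->
    exists X, [/\ F X, Good X, X p & X q].
  move=> p q [X FX Xp] [Y FY Yq]; case: (tot X Y FX FY) => XY.
    by exists Y; split => //; [exact: (PG_good FP FY Yq) | exact: XY].
  by exists X; split => //; [exact: (PG_good FP FX Xp) | exact: XY].
right; split.
- move=> x y y' h1 h2; have [X [FX [fX _ _ _ _] X1 X2]] := two _ _ h1 h2.
  exact: fX X1 X2.
- by exists X0 => //; case: GX0.
- move=> x y x' y' h1 h2; have [X [FX [_ _ aX _ _] X1 X2]] := two _ _ h1 h2.
  by exists X => //; apply: aX.
- move=> r x y [X FX Xp]; exists X => //.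
  by have [_ _ _ sX _] := PG_good FP FX Xp; apply: sX.
- by move=> a Aa; exists X0 => //; case: GX0 => _ _ _ _; apply.
Qed.

Lemma baer_ext : exists g : {linear B -> N}, forall x, A x -> g x = f x.
Proof.
have [G0 [PG0 maxG0]] := Zorn_bigcup PG_chain.
have GG0 : Good G0.
  case: PG0 => // G00; exfalso; apply: (maxG0 _ _ (or_intror Good_graph)).
  rewrite G00; split => // /(_ (0, f 0)); apply => /=; split => //; by case: sA.
case: GG0 => fun0 G00 add0 sc0 A0.
have neg0 : forall x y, G0 (x, y) -> G0 (- x, - y).
  by move=> x y h; rewrite -!scaleN1r; apply: sc0.
pose g (b : B) : N := match pselect (exists y, G0 (b, y)) with
  | left h => projT1 (cid h) | right _ => 0 end.
have gP : forall b y, G0 (b, y) -> g b = y.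
  move=> b y h; rewrite /g; case: pselect => [h'|]; last by move=> hn; exfalso; apply: hn; exists y.
  by case: cid => y' h'' /=; apply: fun0 h'' h.
have tot : forall b, exists y, G0 (b, y).
  move=> x; apply: contrapT => nx.
  pose J (s : RR R) := exists y, G0 ((s : R^c) *: x, y).
  have rJ : right_ideal J.
    split.
    - by exists 0; rewrite scale0r.
    - move=> s t [y hy] [y' hy']; exists (y + y'); rewrite scalerDl; exact: add0.
    - move=> r s [y hy]; exists (r *: y); rewrite /= -scalerA; exact: sc0.
  pose phi (s : RR R) := g ((s : R^c) *: x).
  have hphi : hom_on J phi.
    split.
    - move=> s t [y hy] [y' hy']; rewrite /phi scalerDl (gP _ _ (add0 _ _ _ _ hy hy')).
      by rewrite (gP _ _ hy) (gP _ _ hy').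
    - move=> r s [y hy]; rewrite /phi /= -scalerA (gP _ _ (sc0 _ _ _ hy)).
      by rewrite (gP _ _ hy).
  have [h hh] := HB rJ hphi.
  pose n := h 1.
  have hs : forall s : RR R, h s = (s : R^c) *: n.
    move=> s; rewrite /n -linearZ /=; congr (h _); by rewrite /GRing.scale /= mulr1.
  pose G1 := [set p : B * N | exists c y (s : R^c), G0 (c, y) /\ p = (c + s *: x, y + s *: n)].
  apply: (maxG0 G1); last first.
    right; split.
    - move=> b z z' [c [y [s [hc [-> ->]]]]] [c' [y' [s' [hc' []]]]].
      move=> /eqP; rewrite -subr_eq0 => /eqP e1 ->.
      have e2 : (s - s') *: x = c' - c.
        apply: subr0_eq; rewrite -e1; symmetry; by rewrite opprD addrACA addrC scalerBl opprB.
      have Jd : G0 ((s - s') *: x, y' - y) by rewrite e2; apply: add0 => //; apply: neg0.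
      have := hh (s - s') (ex_intro _ _ Jd); rewrite hs /phi /= (gP _ _ Jd) => e3.
      apply/eqP; rewrite -subr_eq0; apply/eqP.
      have : y + s *: n - (y' + s' *: n) = (s - s') *: n - (y' - y).
        by rewrite opprD addrACA scalerBl opprB addrC.
      by move=> ->; rewrite e3 subrr.
    - by exists 0, 0, 0; split => //; rewrite !scale0r !addr0.
    - move=> b z b' z' [c [y [s [hc [-> ->]]]]] [c' [y' [s' [hc' [-> ->]]]]].
      exists (c + c'), (y + y'), (s + s'); split; first exact: add0.
      by rewrite !scalerDl; congr pair; exact: addrACA.
    - move=> r b z [c [y [s [hc [-> ->]]]]]; exists (r *: c), (r *: y), (r * s); split.
        exact: sc0.
      by rewrite !scalerDr !scalerA.
    - by move=> a Aa; exists a, (f a), 0; split; [apply: A0 | rewrite !scale0r !addr0].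
  split.
    by move=> [b z] hb; exists b, z, 0; split => //; rewrite !scale0r !addr0.
  move=> /(_ (x, n)) h1; apply: nx; exists n.
  by apply: h1; exists 0, 0, 1; split => //; rewrite !scale1r !add0r.
have gG : forall b, G0 (b, g b).
  by move=> b; have [y hy] := tot b; rewrite (gP _ _ hy).
have glin : forall (a : R^c) u v, g (a *: u + v) = a *: g u + g v.
  by move=> a u v; apply: gP; apply: add0 => //; apply: sc0.
exists (mkLin glin) => a Aa; rewrite mkLinE; apply: gP; exact: A0.
Qed.

End Baer.

Lemma baer (R : pzRingType) (N : rmodType R) :
  (forall I : RR R -> Prop, right_ideal I -> extends_all N I) -> injective_mod N.
Proof. by move=> HB B A sA f hf; apply: baer_ext. Qed.

Lemma sum_in (R : pzRingType) (M : rmodType R) (A : M -> Prop) n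
  (c : 'I_n -> R^c) (s : 'I_n -> M) :
  submodule A -> (forall i, A (s i)) -> A (\sum_(i < n) c i *: s i).
Proof.
case=> A0 AD AZ hs; apply: (big_ind A) => //.
by move=> i _; apply: AZ.
Qed.

Section Noeth.
Variable R : pzRingType.

Definition span (l : seq (RR R)) (x : RR R) :=
  exists c : 'I_(size l) -> R^c, x = \sum_(i < size l) c i *: l`_i.

Lemma span_cons l x y : span l y -> span (x :: l) y.
Proof.
move=> [c ->]; exists (fun i => odflt 0 (omap c (unlift ord0 i))).
rewrite big_ord_recl /= unlift_none scale0r add0r; apply: eq_bigr => i _.
by rewrite liftK.
Qed.

Lemma span_head l x : span (x :: l) x.
Proof.
exists (fun i => if unlift ord0 i is Some _ then 0 else 1).
rewrite big_ord_recl /= unlift_none scale1r big1 ?addr0 // => i _.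
by rewrite liftK scale0r.
Qed.

Lemma noeth_fg : right_noetherian R ->
  forall I : RR R -> Prop, right_ideal I -> fin_gen_submodule I.
Proof.
move=> hN I rI; apply: contrapT => nfg.
have ex : forall l : seq (RR R), (forall x, x \in l -> I x) ->
    exists x, I x /\ ~ span l x.
  move=> l hl'; have hl : forall i : 'I_(size l), I l`_i by move=> i; apply: hl'; apply: mem_nth.
  apply: contrapT => hn; apply: nfg; exists (size l), (fun i => l`_i).
  move=> x; split => [Ix|[c ->]]; last exact: sum_in.
  by apply: contrapT => nx; apply: hn; exists x.
pose next (l : seq (RR R)) := match pselect (exists x, I x /\ ~ span l x) with
  | left h => projT1 (cid h) :: l | right _ => l end.
pose L k := iter k next [::].
have inv : forall k, forall x, x \in L k -> I x.
  elim=> [|k IH] //=.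
  rewrite /next; case: pselect => [h|hn]; last by apply: IH.
  case: cid => x [Ix _] /= y; rewrite in_cons => /orP[/eqP ->|] //.
  exact: IH.
have step : forall k, exists x, L k.+1 = x :: L k /\ ~ span (L k) x.
  move=> k; rewrite /L /= {1}/next; case: pselect => [h|hn]; last first.
    by exfalso; apply: hn; apply: ex; apply: inv.
  by case: cid => x [_ nx] /=; exists x.
have rspan : forall l, right_ideal (span l).
  move=> l; split.
  - by exists (fun _ => 0); rewrite big1 // => i _; rewrite scale0r.
  - move=> a b [c ->] [d ->]; exists (fun i => c i + d i).
    by rewrite -big_split /=; apply: eq_bigr => i _; rewrite scalerDl.
  - move=> r a [c ->]; exists (fun i => r * c i).
    rewrite scaler_sumr; apply: eq_bigr => i _.
    by rewrite scalerA.
have mono : forall k y, span (L k) y -> span (L k.+1) y.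
  by move=> k y; have [x [e _]] := step k; rewrite e; apply: span_cons.
have [n hn] := hN (fun k => span (L k)) (fun k => rspan _) mono.
have [x [e nx]] := step n; apply: nx; apply/(hn n.+1 (leqnSn n)).
rewrite e; exact: span_head.
Qed.

End Noeth.

Lemma int_mult (J : int -> Prop) : J 0 -> (forall a b, J a -> J b -> J (a + b)) ->
  (forall a, J a -> J (- a)) -> forall m k, J m -> J (m * k).
Proof.
move=> J0 JD JN m k Jm.
have hn : forall n : nat, J (m * n%:Z).
  elim=> [|n IH]; first by rewrite mulr0.
  by rewrite -addn1 PoszD mulrDr mulr1; apply: JD.
case: k => n; first exact: hn.
by rewrite NegzE mulrN; apply: JN.
Qed.

Lemma int_subgroup (J : int -> Prop) : J 0 -> (forall a b, J a -> J b -> J (a + b)) ->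
  (forall a, J a -> J (- a)) ->
  (forall j, J j -> j = 0) \/ exists m : int, 0 < m /\ forall j, J j <-> (m %| j)%Z.
Proof.
move=> J0 JD JN.
case: (pselect (exists j, J j /\ j != 0)) => [[j [Jj j0]]|hn]; last first.
  left => j Jj; apply: contrapT => /eqP nj; apply: hn; exists j; split => //.
right.
have exP : exists n : nat, `[< J n%:Z >] && (0 < n)%N.
  exists `|j|%N; apply/andP; split; last by rewrite absz_gt0.
  apply/asboolP; move: Jj j0; case: j => n Jj _ //=.
  by move/JN: Jj; rewrite NegzE opprK.
case: (ex_minnP exP) => m0 /andP[/asboolP Jm m0pos] mmin.
exists m0%:Z; split; first by rewrite ltz_nat.
move=> k; split => [Jk|dk]; last first.
  by rewrite -(divzK dk) mulrC; apply: (int_mult J0 JD JN).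
apply/dvdz_mod0P.
have m0nz : (m0%:Z != 0) by rewrite eqz_nat -lt0n.
have r0 := modz_ge0 k m0nz.
have rlt := ltz_mod k m0nz.
have Jr : J (k %% m0%:Z)%Z.
  have -> : (k %% m0%:Z)%Z = k + - (m0%:Z * (k %/ m0%:Z)%Z).
    move: (divz_eq k m0%:Z); set q := (k %/ _)%Z; set r := (k %% _)%Z => e.
    by rewrite [in RHS]e; ring.
  by apply: (JD _ _ Jk); apply: (JN _); exact: (int_mult J0 JD JN).
apply: contrapT => rn0.
move: r0 rlt rn0; set r := (k %% m0%:Z)%Z => r0 rlt rn0.
have Jr' : J `|r|%N by rewrite gez0_abs.
have rpos : (0 < `|r|)%N by rewrite absz_gt0; apply/eqP.
have := mmin `|r|%N; rewrite rpos andbT.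
have -> : `[< J `|r|%N >] = true by apply/asboolP.
move=> /(_ isT); move: rlt r0; clear; lia.
Qed.


Lemma hom0 (R : pzRingType) (M N : rmodType R) (A : M -> Prop) (f : M -> N) :
  submodule A -> hom_on A f -> f 0 = 0.
Proof.
case=> A0 _ _ [hadd _].
have h := hadd 0 0 A0 A0; rewrite addr0 in h.
have : f 0 + f 0 - f 0 = f 0 - f 0 by rewrite -h.
by rewrite addrK subrr.
Qed.

Definition toZ (V : zmodType) : Type := V.
Section ToZ.
Variable V : zmodType.
HB.instance Definition _ := GRing.Zmodule.on (toZ V).
Definition zscale (r : int^c) (v : toZ V) : toZ V := (v : V) *~ (r : int).
Lemma zscaleA a b v : zscale a (zscale b v) = zscale (a * b) v.
Proof. exact: (esym (mulrzA (v : V) b a)). Qed.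
Lemma zscale1 : left_id 1 zscale.
Proof. by move=> v; rewrite /zscale mulr1z. Qed.
Lemma zscaleDr : right_distributive zscale +%R.
Proof. by move=> a u v; rewrite /zscale mulrzDl. Qed.
Lemma zscaleDl v : {morph zscale^~ v : a b / a + b}.
Proof. by move=> a b; rewrite /zscale mulrzDr. Qed.
HB.instance Definition _ := GRing.Zmodule_isLmodule.Build int^c (toZ V)
  zscaleA zscale1 zscaleDr zscaleDl.
End ToZ.

Lemma toZ_scale (V : zmodType) (r : int^c) (v : toZ V) : r *: v = (v : V) *~ (r : int).
Proof. by []. Qed.

Lemma QZ_inj : injective_mod (toZ QZ).
Proof.
apply: baer => I rI phi hphi.
have [I0 ID IZ] := rI.
have IN : forall a, I a -> I (- a).
  by move=> a Ia; have := IZ (-1) a Ia; rewrite /GRing.scale /=; rewrite -[X in I X -> _]/((a : int) * (-1)); rewrite mulrN1.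
case: (int_subgroup I0 ID IN) => [Iz|[m [mpos Im]]].
  have lin : forall (a : int^c) (u v : RR int), (fun _ : RR int => 0 : toZ QZ) (a *: u + v)
     = a *: (fun _ : RR int => 0 : toZ QZ) u + (fun _ : RR int => 0 : toZ QZ) v.
    by move=> a u v; rewrite scaler0 addr0.
  exists (mkLin lin) => x Ix; rewrite mkLinE (Iz x Ix).
  by rewrite (hom0 rI hphi).
pose q0 : QZ := qzm (proj1_sig (phi m : QZ) / m%:~R).
have lin : forall (a : int^c) (u v : RR int), (fun k : RR int => (q0 *~ (k : int) : toZ QZ)) (a *: u + v)
     = a *: (fun k : RR int => (q0 *~ (k : int) : toZ QZ)) u + (fun k : RR int => (q0 *~ (k : int) : toZ QZ)) v.
  move=> a u v; rewrite toZ_scale /= mulrzDr; congr (_ + _).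
  by rewrite /GRing.scale /= mulrzA.
exists (mkLin lin) => x Ix; rewrite mkLinE /=.
have dx : (m %| x)%Z by apply/Im.
have Imm : I m by apply/Im; apply: dvdzz.
have e : (((x %/ m)%Z : int^c) *: (m : RR int)) = x.
  change (m * (x %/ m)%Z = x); by rewrite mulrC divzK.
case: hphi => _ hZ; have := hZ ((x %/ m)%Z : int^c) m Imm; rewrite e => ->.
rewrite toZ_scale /=.
rewrite -{1}(divzK dx) mulrC mulrzA; congr (_ *~ _).
rewrite /q0 -qzmMz -mulrzr divfK; first by exact: qzmK.
by rewrite intr_eq0 gt_eqF.
Qed.


Lemma Kmulz (V : zmodType) (K : V -> Prop) : K 0 -> (forall a b, K a -> K b -> K (a + b)) ->
  (forall a, K a -> K (- a)) -> forall k (r : int), K k -> K (k *~ r).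
Proof.
move=> K0 KD KN k r Kk.
have hn : forall n : nat, K (k *~ n%:Z).
  elim=> [|n IH]; first by rewrite mulr0z.
  by rewrite -addn1 PoszD mulrzDr mulr1z; apply: KD.
case: r => n; first exact: hn.
by rewrite NegzE mulrNz; apply: KN.
Qed.

Lemma frac_not_int (x : rat) : 0 < x -> x < 1 -> qzm x != 0.
Proof.
move=> x0 x1; apply/eqP => /qzm_eq0 /intrP [n en].
move: x0 x1; rewrite en ltr0z -[1]/(1%:~R) ltr_int => n0 n1.
by move: n0 n1; clear; lia.
Qed.

Lemma cogen (V : zmodType) (K : V -> Prop) : K 0 -> (forall a b, K a -> K b -> K (a + b)) ->
  (forall a, K a -> K (- a)) -> forall b, ~ K b ->
  exists chi : V -> QZ, [/\ (forall x y, chi (x + y) = chi x + chi y),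
     (forall k, K k -> chi k = 0) & chi b != 0].
Proof.
move=> K0 KD KN b nKb.
pose J (j : int) := K (b *~ j).
have J0 : J 0 by rewrite /J mulr0z.
have JD : forall a c, J a -> J c -> J (a + c) by move=> a c; rewrite /J mulrzDr; apply: KD.
have JN : forall a, J a -> J (- a) by move=> a; rewrite /J mulrNz; apply: KN.
have [q [qn0 hq]] : exists q : QZ, q != 0 /\ forall j, J j -> q *~ j = 0.
  case: (int_subgroup J0 JD JN) => [Jz|[m [mpos Im]]].
    exists (qzm (1 / 2)); split; first by apply: frac_not_int.
    by move=> j /Jz ->; rewrite mulr0z.
  have m1 : m != 1.
    by apply/eqP => em; apply: nKb; have := (Im 1) => [[_ h]]; rewrite em in h; move: (h (dvdzz _)); rewrite /J mulr1z.
  have m2 : 1 < m by move: mpos m1; clear; lia.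
  exists (qzm (1 / m%:~R)); split.
    apply: frac_not_int; first by rewrite divr_gt0 // ltr0z.
    by rewrite ltr_pdivrMr ?ltr0z // mul1r -[1]/(1%:~R) ltr_int.
  move=> j /Im dj; rewrite -qzmMz -(divzK dj) -mulrzr intrM.
  have mn0 : (m%:~R : rat) != 0 by rewrite intr_eq0 gt_eqF.
  have -> : 1 / m%:~R * (((j %/ m)%Z)%:~R * m%:~R) = ((j %/ m)%Z)%:~R :> rat by field.
  exact: qzm_int.
pose phi (x : V) : QZ := match pselect (exists j, K (x - b *~ j)) with
  | left h => q *~ projT1 (cid h) | right _ => 0 end.
have phiP : forall x j, K (x - b *~ j) -> phi x = q *~ j.
  move=> x j hj; rewrite /phi; case: pselect => [h|hn]; last first.
    by exfalso; apply: hn; exists j.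
  case: cid => j' hj' /=.
  have : J (j' - j).
    rewrite /J mulrzBr.
    have -> : b *~ j' - b *~ j = (x - b *~ j) + - (x - b *~ j') by rewrite opprB [RHS]addrC addrA subrK.
    by apply: KD => //; apply: KN.
  move/hq; rewrite mulrzBr => /eqP; rewrite subr_eq0 => /eqP.
  done.
pose A' (x : toZ V) := exists k j, K k /\ (x : V) = k + b *~ j.
have phiA : forall k j, K k -> phi (k + b *~ j) = q *~ j.
  by move=> k j Kk; apply: phiP; rewrite addrK.
have sA' : submodule A'.
  split.
  - by exists 0, 0; split => //; rewrite mulr0z addr0.
  - move=> x y [k [j [Kk ->]]] [k' [j' [Kk' ->]]]; exists (k + k'), (j + j'); split.
      exact: KD.
    by rewrite mulrzDr addrACA.
  - move=> r x [k [j [Kk ->]]]; exists (k *~ r), (j * r); split.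
      exact: Kmulz.
    by rewrite toZ_scale mulrzDl mulrzA.
have hA' : hom_on A' (phi : toZ V -> toZ QZ).
  split.
  - move=> x y [k [j [Kk ->]]] [k' [j' [Kk' ->]]].
    have -> : k + b *~ j + (k' + b *~ j') = (k + k') + b *~ (j + j') by rewrite mulrzDr addrACA.
    by rewrite !phiA //; [rewrite mulrzDr | apply: KD].
  - move=> r x [k [j [Kk ->]]].
    rewrite !toZ_scale /=.
    have -> : (k + b *~ j) *~ r = k *~ r + b *~ (j * r) by rewrite mulrzDl mulrzA.
    by rewrite !phiA // ?mulrzA //; apply: Kmulz.
have [g hg] := QZ_inj sA' hA'.
exists (fun x => g x); split.
- by move=> x y; rewrite linearD.
- move=> k Kk; rewrite hg; last by exists k, 0; split => //; rewrite mulr0z addr0.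
  rewrite (phiP _ 0); first by [].
  by rewrite mulr0z subr0.
- rewrite hg; last by exists 0, 1; split => //; rewrite add0r mulr1z.
  rewrite (phiP _ 1); first by [].
  by rewrite mulr1z subrr.
Qed.

Lemma additive_mulz (U V : zmodType) (h : U -> V) :
  (forall x y, h (x + y) = h x + h y) -> forall x (r : int), h (x *~ r) = h x *~ r.
Proof.
move=> hD.
have h0 : h 0 = 0.
  have := hD 0 0; rewrite addr0 => e.
  have : h 0 + h 0 - h 0 = h 0 - h 0 by rewrite -e.
  by rewrite addrK subrr.
have hN : forall x, h (- x) = - h x.
  move=> x; apply/eqP; rewrite -subr_eq0 opprK -hD addNr h0 //.
have hn : forall x (n : nat), h (x *~ n%:Z) = h x *~ n%:Z.
  move=> x; elim=> [|n IH]; first by rewrite !mulr0z.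
  by rewrite -addn1 PoszD !mulrzDr !mulr1z hD IH.
move=> x [] n; first exact: hn.
by rewrite NegzE !mulrNz hN hn.
Qed.

Section Fam.
Variable R : pzRingType.
Variables (X : Type) (lvl : X -> nat) (fin : bool).

Definition famP (e : X -> R -> QZ) :=
  (forall x s t, e x (s + t) = e x s + e x t) /\
  (fin -> exists N, forall x, (N <= lvl x)%N -> forall s, e x s = 0).

Definition Fam := {e | famP e}.
HB.instance Definition _ := gen_eqMixin Fam.
HB.instance Definition _ := gen_choiceMixin Fam.

Definition fval (a : Fam) : X -> R -> QZ := proj1_sig a.

Lemma fam_ext (a b : Fam) : (forall x s, fval a x s = fval b x s) -> a = b.
Proof.
case: a => fa pa; case: b => fb pb /= h.
have e : fa = fb by apply/funext => x; apply/funext => s; apply: h.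
subst fb; congr exist; apply: Prop_irrelevance.
Qed.

Lemma fam0P : famP (fun _ _ => 0).
Proof. by split => [x s t|_]; [rewrite addr0 | exists 0%N]. Qed.
Definition fzero : Fam := exist _ _ fam0P.

Lemma famAddP (a b : Fam) : famP (fun x s => fval a x s + fval b x s).
Proof.
case: a => fa [ha sa]; case: b => fb [hb sb] /=; split.
  by move=> x s t; rewrite ha hb addrACA.
move=> hf; have [Na hNa] := sa hf; have [Nb hNb] := sb hf.
exists (maxn Na Nb) => x hx s; rewrite hNa ?hNb ?addr0 //.
  by move: hx; rewrite geq_max => /andP[].
by move: hx; rewrite geq_max => /andP[].
Qed.
Definition fadd (a b : Fam) : Fam := exist _ _ (famAddP a b).

Lemma famOppP (a : Fam) : famP (fun x s => - fval a x s).
Proof.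
case: a => fa [ha sa] /=; split; first by move=> x s t; rewrite ha opprD.
by move=> hf; have [N hN] := sa hf; exists N => x hx s; rewrite hN ?oppr0.
Qed.
Definition fopp (a : Fam) : Fam := exist _ _ (famOppP a).

Lemma fadd_A : associative fadd.
Proof. by move=> a b c; apply: fam_ext => x s /=; rewrite addrA. Qed.
Lemma fadd_C : commutative fadd.
Proof. by move=> a b; apply: fam_ext => x s /=; rewrite addrC. Qed.
Lemma fadd_0 : left_id fzero fadd.
Proof. by move=> a; apply: fam_ext => x s /=; rewrite add0r. Qed.
Lemma fadd_N : left_inverse fzero fopp fadd.
Proof. by move=> a; apply: fam_ext => x s /=; rewrite addNr. Qed.

HB.instance Definition _ := GRing.isZmodule.Build Fam fadd_A fadd_C fadd_0 fadd_N.

Lemma famScaleP (r : R^c) (a : Fam) : famP (fun x s => fval a x ((r : R) * s)).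
Proof.
case: a => fa [ha sa] /=; split; first by move=> x s t; rewrite mulrDr ha.
by move=> hf; have [N hN] := sa hf; exists N => x hx s; rewrite hN.
Qed.
Definition fscale (r : R^c) (a : Fam) : Fam := exist _ _ (famScaleP r a).

Lemma fscaleA a b v : fscale a (fscale b v) = fscale (a * b) v.
Proof. by apply: fam_ext => x s /=; rewrite mulrA. Qed.
Lemma fscale1 : left_id 1 fscale.
Proof. by move=> v; apply: fam_ext => x s /=; rewrite mul1r. Qed.
Lemma fscaleDr : right_distributive fscale +%R.
Proof. by move=> a u v; apply: fam_ext => x s. Qed.
Lemma fscaleDl v : {morph fscale^~ v : a b / a + b}.
Proof.
move=> a b; apply: fam_ext => x s /=; rewrite mulrDl.
by case: v => fv [hv _] /=; rewrite hv.
Qed.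
HB.instance Definition _ := GRing.Zmodule_isLmodule.Build R^c Fam
  fscaleA fscale1 fscaleDr fscaleDl.

Lemma fvalD (a b : Fam) x s : fval (a + b) x s = fval a x s + fval b x s.
Proof. by []. Qed.
Lemma fvalZ (r : R^c) (a : Fam) x s : fval (r *: a) x s = fval a x ((r : R) * s).
Proof. by []. Qed.
Lemma fval0 x s : fval (0 : Fam) x s = 0.
Proof. by []. Qed.
Lemma fvalDs (a : Fam) x s t : fval a x (s + t) = fval a x s + fval a x t.
Proof. by case: a => fa [ha hs]; apply: ha. Qed.

End Fam.

Lemma subZ (R : pzRingType) (B : rmodType R) (A : B -> Prop) :
  submodule A -> @submodule _ (toZ B) A.
Proof.
case=> A0 AD AZ; split => // r x Ax.
by rewrite toZ_scale -scaler_int; apply: AZ.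
Qed.

Lemma fam_ext_lin (R : pzRingType) (X : Type) (lvl : X -> nat) (fin : bool)
  (B : rmodType R) (A : B -> Prop) (sA : submodule A) (f : B -> Fam R lvl fin)
  (hf : hom_on A f) (x : X) :
  exists g : {linear toZ B -> toZ QZ}, forall b, A b -> g b = fval (f b) x 1.
Proof.
apply: (QZ_inj (subZ sA)); split.
- by move=> b b' Ab Ab'; case: hf => hD _; rewrite hD.
- move=> r b Ab; rewrite !toZ_scale -scaler_int.
  case: hf => _ hZ; rewrite hZ // fvalZ.
  rewrite -(additive_mulz (fun s => fvalDs (f b) x s)).
  by rewrite mulr1.
Qed.

Lemma fam_inj (R : pzRingType) (X : Type) (lvl : X -> nat) :
  injective_mod (Fam R lvl false).
Proof.
move=> B A sA f hf.
have H := fam_ext_lin sA hf.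
pose gx x := projT1 (cid (H x)).
have gxP : forall x b, A b -> gx x b = fval (f b) x 1.
  by move=> x b Ab; rewrite /gx; case: cid => g hg /=; apply: hg.
have GP : forall b : B, famP lvl false (fun x (s : R) => (gx x ((s : R^c) *: b) : QZ)).
  move=> b; split => // x s t; rewrite scalerDl.
  exact: (linearD (gx x)).
pose G (b : B) : Fam R lvl false := exist _ _ (GP b).
have Glin : forall (a : R^c) u v, G (a *: u + v) = a *: G u + G v.
  move=> a u v; apply: fam_ext => x s; rewrite fvalD fvalZ /=.
  rewrite scalerDr scalerA; exact: (linearD (gx x)).
exists (mkLin Glin) => b Ab; rewrite mkLinE; apply: fam_ext => x s /=.
case: sA => _ _ AZ.
rewrite gxP; last exact: AZ.
by case: hf => _ ->; rewrite // fvalZ mulr1.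
Qed.

Lemma hom_sum (R : pzRingType) (M N : rmodType R) (A : M -> Prop) (f : M -> N) n
  (c : 'I_n -> R^c) (s : 'I_n -> M) : submodule A -> hom_on A f ->
  (forall i, A (s i)) -> f (\sum_(i < n) c i *: s i) = \sum_(i < n) c i *: f (s i).
Proof.
move=> sA hf; elim: n c s => [|n IH] c s hs.
  by rewrite !big_ord0; apply: (hom0 sA hf).
rewrite !big_ord_recr /=.
have [A0 AD AZ] := sA; have [hD hZ] := hf.
rewrite hD; last by apply: AZ.
  by rewrite hZ // IH.
by apply: (sum_in (fun i => c (widen_ord (leqnSn n) i))) => //.
Qed.

Lemma fam_finj (R : pzRingType) (X : Type) (lvl : X -> nat) :
  F_injective (Fam R lvl true).
Proof.
move=> I rI [n [s hs]] f hf.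
have sI : forall i, I (s i).
  move=> i; apply/hs; exists (fun j => if j == i then 1 else 0).
  rewrite (bigD1 i) //= eqxx scale1r big1 ?addr0 // => j /negbTE ->.
  by rewrite scale0r.
have hN : forall i, exists N, forall x, (N <= lvl x)%N -> forall t, fval (f (s i)) x t = 0.
  by move=> i; case: (f (s i)) => e [_ he] /=; apply: he.
pose Ni i := projT1 (cid (hN i)).
have NiP : forall i x, (Ni i <= lvl x)%N -> forall t, fval (f (s i)) x t = 0.
  by move=> i; rewrite /Ni; case: cid.
pose N := (\max_(i < n) Ni i)%N.
pose Sup (e : Fam R lvl true) := forall x, (N <= lvl x)%N -> forall t, fval e x t = 0.
have sSup : submodule Sup.
  split.
  - by [].
  - by move=> a b ha hb x hx t; rewrite fvalD ha ?hb ?addr0.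
  - by move=> r a ha x hx t; rewrite fvalZ ha.
have supI : forall a, I a -> Sup (f a).
  move=> a /hs [c ->]; rewrite (hom_sum c rI hf sI).
  apply: sum_in => // i x hx t; apply: NiP.
  by apply: leq_trans hx; apply: (leq_bigmax i).
have H := fam_ext_lin rI hf.
pose gx x := projT1 (cid (H x)).
have gxP : forall x b, I b -> gx x b = fval (f b) x 1.
  by move=> x b Ab; rewrite /gx; case: cid => g hg /=; apply: hg.
have GP : forall b : RR R, famP lvl true
    (fun x (t : R) => if (lvl x < N)%N then (gx x ((t : R^c) *: b) : QZ) else 0).
  move=> b; split.
    move=> x u v; case: ifP => _; last by rewrite addr0.
    by rewrite scalerDl; exact: (linearD (gx x)).
  by move=> _; exists N => x hx t; rewrite ltnNge hx.
pose G (b : RR R) : Fam R lvl true := exist _ _ (GP b).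
have Glin : forall (a : R^c) u v, G (a *: u + v) = a *: G u + G v.
  move=> a u v; apply: fam_ext => x t; rewrite fvalD fvalZ /=.
  case: ifP => _; last by rewrite addr0.
  rewrite scalerDr scalerA; exact: (linearD (gx x)).
exists (mkLin Glin) => b Ab; rewrite mkLinE; apply: fam_ext => x t /=.
case: ifP => hx; last by rewrite (supI b Ab) // leqNgt hx.
case: rI => _ _ AZ.
rewrite gxP; last exact: AZ.
by case: hf => _ ->; rewrite // fvalZ mulr1.
Qed.

Section Embed.
Variable R : pzRingType.
Variable M : rmodType R.

Definition Xm := {chi : M -> QZ | forall x y, chi (x + y) = chi x + chi y}.
Definition EM := Fam R (fun _ : Xm => 0%N) false.

Lemma psiP (m : M) : famP (fun _ : Xm => 0%N) false
  (fun (x : Xm) (s : R) => proj1_sig x ((s : R^c) *: m)).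
Proof.
split => // x s t; rewrite scalerDl; case: x => chi hchi /=; exact: hchi.
Qed.
Definition psi0 (m : M) : EM := exist _ _ (psiP m).

Lemma psi_lin : forall (a : R^c) u v, psi0 (a *: u + v) = a *: psi0 u + psi0 v.
Proof.
move=> a u v; apply: fam_ext => x s; rewrite fvalD fvalZ /=.
by case: x => chi hchi /=; rewrite scalerDr scalerA hchi.
Qed.
Definition psi : {linear M -> EM} := mkLin psi_lin.

Lemma psi_inj : injective psi.
Proof.
move=> m m' e; apply: contrapT => nm.
have K0 : (0 : M) = 0 by [].
have KD : forall a b : M, a = 0 -> b = 0 -> a + b = 0 by move=> a b -> ->; rewrite addr0.
have KN : forall a : M, a = 0 -> - a = 0 by move=> a ->; rewrite oppr0.
have nb : ~ (m - m' = 0) by move/eqP; rewrite subr_eq0 => /eqP.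
have [chi [hD _ hb]] := cogen (K := fun y : M => y = 0) K0 KD KN nb.
have hN : forall y, chi (- y) = - chi y.
  move=> y; apply/eqP; rewrite -subr_eq0 opprK -hD addNr.
  have := hD 0 0; rewrite addr0 => h0.
  have : chi 0 + chi 0 - chi 0 = chi 0 - chi 0 by rewrite -h0.
  by rewrite addrK subrr => ->.
pose x : Xm := exist _ chi hD.
have := congr1 (fun e => fval e x 1) e; rewrite !mkLinE /= !scale1r => ec.
by move/eqP: hb; apply; rewrite hD hN ec subrr.
Qed.

End Embed.
Arguments psi : simpl never.

Lemma pairZ (R : pzRingType) (M E : rmodType R) (a : R^c) (x : M) (y : E) :
  a *: ((x, y) : (M * E)%type) = (a *: x, a *: y).
Proof. by []. Qed.
Lemma pairD (R : pzRingType) (M E : rmodType R) (x x' : M) (y y' : E) :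
  ((x, y) : (M * E)%type) + (x', y') = (x + x', y + y').
Proof. by []. Qed.

Lemma inj_Finj (R : pzRingType) (N : rmodType R) : injective_mod N -> F_injective N.
Proof. by move=> hN I rI _; apply: hN. Qed.

Lemma prod_Finj (R : pzRingType) (M E : rmodType R) :
  F_injective M -> F_injective E -> F_injective (M * E)%type.
Proof.
move=> hM hE I rI fg f hf.
have hf1 : hom_on I (fun r => (f r).1).
  by case: hf => hD hZ; split => [x y Ix Iy|r x Ix]; rewrite ?hD ?hZ.
have hf2 : hom_on I (fun r => (f r).2).
  by case: hf => hD hZ; split => [x y Ix Iy|r x Ix]; rewrite ?hD ?hZ.
have [g1 hg1] := hM I rI fg _ hf1.
have [g2 hg2] := hE I rI fg _ hf2.
have glin : forall (a : R^c) (u v : RR R), (fun r => (g1 r, g2 r)) (a *: u + v) =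
   a *: (fun r => (g1 r, g2 r)) u + (fun r => (g1 r, g2 r)) v.
  by move=> a u v /=; rewrite !linearP.
exists (mkLin glin) => x Ix; rewrite mkLinE hg1 // hg2 //.
by case: (f x).
Qed.

Lemma lemmaT (R : pzRingType) :
  (forall N : rmodType R, F_injective N -> quasi_pseudo_principally_injective N) ->
  forall M : rmodType R, F_injective M -> injective_mod M.
Proof.
move=> H3 M hM.
pose E := EM M.
have Einj : injective_mod E := @fam_inj R _ _.
pose NN := (M * E)%type.
have hNN := H3 NN (prod_Finj hM (inj_Finj Einj)).
pose A (p : NN) := exists m, p = (0, psi M m).
have hlin : forall (a : R^c) (u v : NN), (fun p : NN => ((0 : M), psi M p.1) : NN) (a *: u + v) =
   a *: (fun p : NN => ((0 : M), psi M p.1) : NN) u + (fun p : NN => ((0 : M), psi M p.1) : NN) v.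
  by move=> a u v /=; rewrite psi_lin pairZ pairD scaler0 addr0.
have cA : M_cyclic A.
  exists (mkLin hlin) => p; rewrite /A; split => [[m ->]|[q ->]].
    by exists (m, 0); rewrite mkLinE.
  by exists q.1; rewrite mkLinE.
pose psiinv (e : E) : M := match pselect (exists m, psi M m = e) with
  | left h => projT1 (cid h) | right _ => 0 end.
have psiinvK : forall m, psiinv (psi M m) = m.
  move=> m; rewrite /psiinv; case: pselect => [h|hn]; last by exfalso; apply: hn; exists m.
  by case: cid => m' /= /psi_inj.
pose f0 (p : NN) : NN := (psiinv p.2, 0).
have f0E : forall e, f0 (0, e) = (psiinv e, 0) by [].
have mf0 : mono_on A f0.
  split; first split.
  - move=> p q [m ->] [m' ->]; rewrite pairD addr0 -linearD !f0E !psiinvK.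
    by rewrite pairD addr0.
  - move=> r p [m ->]; rewrite pairZ scaler0 -linearZ !f0E !psiinvK.
    by rewrite pairZ scaler0.
  - move=> p q [m ->] [m' ->]; rewrite !f0E !psiinvK; case => ->.
    done.
have [g hg] := hNN A cA f0 mf0.
pose rho (e : E) : M := (g (0, e)).1.
have rhoK : forall m, rho (psi M m) = m.
  by move=> m; rewrite /rho hg; [rewrite /f0 /= psiinvK | exists m].
move=> B A' sA' f hf.
have hf' : hom_on A' (fun b => psi M (f b)).
  by case: hf => hD hZ; split => [x y Ix Iy|r x Ix]; rewrite ?hD ?hZ ?linearD ?linearZ.
have [G hG] := Einj B A' sA' _ hf'.
have flin : forall (a : R^c) (u v : B), (fun b => rho (G b)) (a *: u + v) =
   a *: (fun b => rho (G b)) u + (fun b => rho (G b)) v.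
  move=> a u v; rewrite /rho /= linearP.
  have -> : ((0 : M), a *: G u + G v) = a *: ((0 : M), G u) + ((0 : M), G v) :> NN.
    by rewrite pairZ pairD scaler0 addr0.
  by rewrite linearP.
exists (mkLin flin) => b Ab; rewrite mkLinE /= hG //.
Qed.

Lemma bass (R : pzRingType) :
  (forall M : rmodType R, F_injective M -> injective_mod M) -> right_noetherian R.
Proof.
move=> HI I rI mono.
have monok : forall k n, (k <= n)%N -> forall a, I k a -> I n a.
  move=> k n /subnK <-; elim: (n - k)%N => [|d IH] a h //.
  by rewrite addSn; apply: mono; apply: IH.
pose X' := {p : nat * (RR R -> QZ) | (forall a b, p.2 (a + b) = p.2 a + p.2 b) /\
                                      (forall a, I p.1 a -> p.2 a = 0)}.
pose lvl (x : X') := (proj1_sig x).1.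
pose MM := Fam R lvl true.
have injMM : injective_mod MM := HI MM (@fam_finj R X' lvl).
pose Iu (a : RR R) := exists k, I k a.
have rIu : right_ideal Iu.
  split.
  - by exists 0%N; case: (rI 0%N).
  - move=> a b [k Ia] [k' Ib]; exists (maxn k k'); case: (rI (maxn k k')) => _ hD _.
    by apply: hD; [apply: (monok k) Ia; rewrite leq_maxl | apply: (monok k') Ib; rewrite leq_maxr].
  - by move=> r a [k Ia]; exists k; case: (rI k) => _ _; apply.
have fP : forall a, Iu a -> famP lvl true (fun (x : X') (s : R) => (proj1_sig x).2 ((s : R^c) *: a)).
  move=> a [k Ia]; split.
    move=> [[n chi] [hD hK]] s t /=; rewrite scalerDl; exact: hD.
  move=> _; exists k => [[[n chi] [hD hK]]] /= hx s; apply: (hK _).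
  by case: (rI n) => _ _; apply; apply: (monok k).
pose fmap (a : RR R) : MM := match pselect (Iu a) with
  | left h => exist _ _ (fP a h) | right _ => 0 end.
have fmapE : forall a x s, Iu a -> fval (fmap a) x s = (proj1_sig x).2 ((s : R^c) *: a).
  by move=> a x s h; rewrite /fmap; case: pselect.
have hfm : hom_on Iu fmap.
  split.
  - move=> a b ha hb; apply: fam_ext => x s; rewrite fvalD !fmapE //; last first.
      by case: rIu => _ hD _; apply: hD.
    by rewrite scalerDr; case: x => [[n chi] [hD hK]] /=; apply: hD.
  - move=> r a ha; apply: fam_ext => x s; rewrite fvalZ !fmapE //; last first.
      by case: rIu => _ _; apply.
    by rewrite scalerA.
have [g hg] := injMM _ Iu rIu fmap hfm.
have [N hN] : exists N, forall x, (N <= lvl x)%N -> forall s, fval (g 1) x s = 0.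
  by have [_ he] := proj2_sig (g 1); apply: he.
have key : forall a, Iu a -> I N a.
  move=> a ha; apply: contrapT => nIa.
  have [K0 KD KZ] := rI N.
  have KN : forall b, I N b -> I N (- b) by move=> b hb; rewrite -scaleN1r; apply: KZ.
  have [chi [hD hK hchi]] := cogen K0 KD KN nIa.
  pose x : X' := exist _ (N, chi) (conj hD hK).
  have e1 : (a : R^c) *: (1 : RR R) = a.
    change ((a : R^c) * 1 = a); exact: mulr1.
  have := fmapE a x 1 ha; rewrite -hg // -e1 linearZ fvalZ hN //= scale1r.
  by move=> h; rewrite e1 in h; move/eqP: hchi; apply; rewrite -h.
exists N => n hn a; split => [h|]; last exact: monok.
by apply: key; exists n.
Qed.

Lemma inj_qppi (R : pzRingType) (M : rmodType R) :
  injective_mod M -> quasi_pseudo_principally_injective M.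
Proof.
move=> hM A [h hh] f [hf _].
have sA : submodule A.
  split.
  - by apply/hh; exists 0; rewrite linear0.
  - move=> x y /hh [u ->] /hh [v ->]; apply/hh; exists (u + v); by rewrite linearD.
  - move=> r x /hh [u ->]; apply/hh; exists (r *: u); by rewrite linearZ.
exact: hM M A sA f hf.
Qed.

Unset Implicit Arguments.
Theorem proposition2p16 (R : pzRingType) :
  [<-> right_noetherian R;
       forall M : rmodType R, F_injective M -> injective_mod M;
       forall M : rmodType R, F_injective M -> quasi_pseudo_principally_injective M].
Proof.
tfae.
- move=> h1 M hM; apply: baer => I rI; apply: hM => //; exact: noeth_fg.
- by move=> h2 M hM; apply: inj_qppi; apply: h2.
- by move=> h3; apply: bass; apply: lemmaT.
Qed.
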